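(* Let $0<m<L$, $\kappa=L/m$, $\delta\in(0,1)$, $\alpha>0$, and $\rho_\mathrm{GD}(\delta)=\max(1-\alpha m(1-\delta),\ \alpha L(1+\delta)-1)$. Define \[ F(t,\lambda) = -\alpha^2(L-m)^2+2mL\alpha^2\lambda(1-\delta^2) +2\alpha\lambda(m+L)(t-1) + \lambda(2-\delta^2\lambda)(t-1)^2 \] and \[ \rho_\star=\inf\{\rho\ge\rho_\mathrm{GD}(\delta):\ F(\rho,\lambda)\ge0 \text{ and } F(-\rho,\lambda)\ge0 \text{ for some }\lambda\in[0,2/\delta^2]\}. \] Then $\rho_\star=\rho_\mathrm{GD}(\delta)$ if and only if one of the following holds: (1) $\delta<2/(\kappa+1)$ and $\alpha\le \alpha_-:=\frac{1}{1-\delta}\left(\frac{2}{L+m}-\frac{\delta}{m}\right)$; (2) $\delta\in[0,1)$ and $\alpha\ge\alpha_+:=\frac{1}{1+\delta}\left(\frac{2}{L+m}+\frac{\delta}{L}\right)$. *)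

(* Defs.v *)
From HB Require Import structures.
From mathcomp Require Import all_boot all_order all_algebra.
From mathcomp Require Import boolp classical_sets reals.
Set Implicit Arguments. Unset Strict Implicit. Unset Printing Implicit Defensive.
Import Order.TTheory GRing.Theory Num.Theory.
Local Open Scope ring_scope.
Local Open Scope classical_set_scope.

Definition rhoGD {R : realType} (m L alpha delta : R) : R :=
  Num.max (1 - alpha * m * (1 - delta)) (alpha * L * (1 + delta) - 1).

Definition Fq {R : realType} (m L alpha delta t lam : R) : R :=
  - alpha ^+ 2 * (L - m) ^+ 2
  + 2 * m * L * alpha ^+ 2 * lam * (1 - delta ^+ 2)
  + 2 * alpha * lam * (m + L) * (t - 1)
  + lam * (2 - delta ^+ 2 * lam) * (t - 1) ^+ 2.

Definition feasible_rates {R : realType} (m L alpha delta : R) : set R :=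
  [set rho | rhoGD m L alpha delta <= rho /\
     exists lam : R, 0 <= lam /\ lam <= 2 / delta ^+ 2 /\
       0 <= Fq m L alpha delta rho lam /\ 0 <= Fq m L alpha delta (- rho) lam].

Definition rho_star {R : realType} (m L alpha delta : R) : R :=
  inf (feasible_rates m L alpha delta).

(* Main.v *)
Require Import Defs.
From HB Require Import structures.
From mathcomp Require Import all_boot all_order all_algebra.
From mathcomp Require Import boolp classical_sets reals.
From mathcomp Require Import ring lra.
Import Order.TTheory GRing.Theory Num.Theory.
Local Open Scope ring_scope.

Lemma Fq_t {R : realType} (m L a d t t0 l : R) :
  Fq m L a d t l = Fq m L a d t0 l +
   (t - t0) * (2 * a * l * (m + L) + l * (2 - d^+2 * l) * (t + t0 - 2)).
Proof. rewrite /Fq; ring. Qed.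

Lemma w_bounds {R : realType} (d l : R) : 0 < d -> 0 <= l -> l <= 2 / d^+2 ->
  0 <= l * (2 - d^+2 * l) /\ l * (2 - d^+2 * l) <= 1 / d^+2.
Proof.
move=> hd hl0 hl1.
have d2 : 0 < d^+2 by rewrite exprn_gt0.
have hdl : d^+2 * l <= 2 by rewrite mulrC -ler_pdivlMr.
split; first by apply: mulr_ge0 => //; lra.
rewrite ler_pdivlMr //.
have : 0 <= (1 - d^+2 * l)^+2 by apply: sqr_ge0.
nra.
Qed.

Definition Kc {R : realType} (m L a d r0 : R) :=
  2 * a * (2 / d^+2) * (m + L) + (2 * r0 + 3) / d^+2.

Lemma wz_le {R : realType} (w z Z d : R) : 0 < d -> 0 <= w -> w <= 1 / d^+2 ->
  z <= Z -> 0 <= Z -> w * z <= Z / d^+2.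
Proof.
move=> hd w0 w1 hz hZ.
have d2 : 0 < d^+2 by rewrite exprn_gt0.
have [hz0|hz0] := lerP z 0.
  have h : w * z <= 0 by rewrite mulr_ge0_le0.
  apply: le_trans h _; apply: divr_ge0; lra.
apply: (@le_trans _ _ (w * Z)); first by apply: ler_wpM2l.
apply: (@le_trans _ _ (1 / d^+2 * Z)); first by apply: ler_wpM2r.
by rewrite mul1r mulrC.
Qed.

Lemma Fq_lip {R : realType} (m L a d r0 r l : R) :
  0 <= m -> 0 <= L -> 0 <= a -> 0 < d -> 0 <= r0 -> r0 <= r -> r <= r0 + 1 ->
  0 <= l -> l <= 2 / d^+2 ->
  Fq m L a d r l <= Fq m L a d r0 l + (r - r0) * Kc m L a d r0 /\
  Fq m L a d (- r) l <= Fq m L a d (- r0) l + (r - r0) * Kc m L a d r0.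
Proof.
move=> hm hL ha hd hr0 hr1 hr2 hl0 hl1.
have [w0 w1] := @w_bounds _ d l hd hl0 hl1.
have hrr : 0 <= r - r0 by lra.
have A1 : 2 * a * l * (m + L) <= 2 * a * (2 / d^+2) * (m + L).
  apply: ler_wpM2r; first lra.
  by apply: ler_wpM2l => //; apply: mulr_ge0.
have A0 : 0 <= 2 * a * l * (m + L).
  by apply: mulr_ge0; [apply: mulr_ge0; [apply: mulr_ge0|]|]; lra.
have B1 : l * (2 - d^+2 * l) * (r + r0 - 2) <= (2 * r0 + 3) / d^+2.
  by apply: wz_le => //; lra.
have B2 : l * (2 - d^+2 * l) * (r + r0 + 2) <= (2 * r0 + 3) / d^+2.
  by apply: wz_le => //; lra.
rewrite (Fq_t m L a d r r0 l) (Fq_t m L a d (- r) (- r0) l) /Kc.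
set w := l * (2 - d^+2 * l) in B1 B2 *.
split.
  rewrite lerD2l; apply: ler_wpM2l => //.
  exact: lerD.
rewrite lerD2l.
have -> : (- r - - r0) * (2 * a * l * (m + L) + w * (- r + - r0 - 2))
   = (r - r0) * (- (2 * a * l * (m + L)) + w * (r + r0 + 2)) by ring.
apply: ler_wpM2l => //.
have : 0 <= 2 * a * (2 / d^+2) * (m + L) by lra.
lra.
Qed.

Definition Bq {R : realType} (m L a d t : R) :=
  2 * m * L * a^+2 * (1 - d^+2) + 2 * a * (m + L) * (t - 1) + 2 * (t - 1)^+2.

Lemma Fq_l {R : realType} (m L a d t l ls : R) :
  Fq m L a d t l = Fq m L a d t ls +
    (l - ls) * (Bq m L a d t - d^+2 * (t - 1)^+2 * (l + ls)).
Proof. rewrite /Fq /Bq; ring. Qed.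

Lemma Fq_llip {R : realType} (m L a d t l ls Lam : R) :
  0 <= l -> 0 <= ls -> l <= Lam ->
  Fq m L a d t l <= Fq m L a d t ls +
    `|l - ls| * (`|Bq m L a d t| + d^+2 * (t - 1)^+2 * (Lam + ls)).
Proof.
move=> hl hls hlL; rewrite (Fq_l m L a d t l ls) lerD2l.
apply: (le_trans (ler_norm _)); rewrite normrM; apply: ler_wpM2l => //.
apply: (le_trans (ler_normB _ _)); rewrite lerD2l.
have c0 : 0 <= d^+2 * (t - 1)^+2 by apply: mulr_ge0; apply: sqr_ge0.
rewrite ger0_norm; last by apply: mulr_ge0 => //; lra.
by apply: ler_wpM2l => //; lra.
Qed.

Lemma approx {R : realType} (g1 g2 : R -> R -> R) (r0 Lam K K2 c ls : R) :
  0 < c -> 0 <= K -> 0 <= K2 ->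
  (forall r l, r0 <= r -> r <= r0 + 1 -> 0 <= l -> l <= Lam ->
     g1 r l <= g1 r0 l + (r - r0) * K /\ g2 r l <= g2 r0 l + (r - r0) * K) ->
  (forall l, g1 r0 l = - c * (l - ls)^+2) ->
  (forall l, 0 <= l -> l <= Lam -> g2 r0 l <= g2 r0 ls + `|l - ls| * K2) ->
  (forall e, 0 < e -> exists r l, [/\ r0 <= r < r0 + e, 0 <= l <= Lam,
       0 <= g1 r l & 0 <= g2 r l]) ->
  0 <= g2 r0 ls.
Proof.
move=> c0 K0 K20 hlip hsq hl2 happ.
rewrite leNgt; apply/negP => hneg.
set g := - g2 r0 ls.
have g0 : 0 < g by rewrite /g oppr_gt0.
set rr := g / (3 * (K2 + 1)).
have rr0 : 0 < rr by apply: divr_gt0 => //; lra.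
have hrK : rr * K2 <= g / 3.
  have -> : g / 3 = rr * (K2 + 1) by rewrite /rr; field; lra.
  by apply: ler_wpM2l; lra.
set e := Num.min 1 (Num.min (g / (3 * (K + 1))) (c * rr^+2 / (K + 1))).
have e0 : 0 < e.
  rewrite /e !lt_min ltr01 /=; apply/andP; split; apply: divr_gt0 => //; try lra.
  by apply: mulr_gt0 => //; apply: exprn_gt0.
have [r [l [/andP[hr1 hr2] /andP[hl0 hl1] hg1 hg2]]] := happ e e0.
move: hr2; rewrite -ltrBlDl /e !lt_min => /andP[hre1 /andP[hre2 hre3]].
have [L1 L2] := hlip r l hr1 ltac:(lra) hl0 hl1.
have hrr : 0 <= r - r0 by lra.
have eK1 : (r - r0) * (K + 1) <= g / 3.
  rewrite -ler_pdivlMr; last lra.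
  have -> : g / 3 / (K + 1) = g / (3 * (K + 1)) by field; lra.
  exact: ltW.
have eK2 : (r - r0) * (K + 1) < c * rr^+2.
  by rewrite -ltr_pdivlMr; [|lra].
have H1 : c * (l - ls)^+2 < c * rr^+2.
  move: L1; rewrite hsq => L1. nra.
have H2 : `|l - ls| < rr.
  rewrite ltr_pM2l // in H1.
  rewrite ltNge; apply/negP => hh.
  have hn : `|l - ls| ^+ 2 = (l - ls) ^+ 2 by rewrite real_normK ?num_real.
  have : rr * rr <= `|l - ls| * `|l - ls| by apply: ler_pM => //; apply: ltW.
  rewrite -!expr2 hn; lra.
have H3 := hl2 l hl0 hl1.
have : `|l - ls| * K2 <= rr * K2 by apply: ler_wpM2r => //; apply: ltW.
rewrite /g in hrK eK1 *.
nra.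
Qed.

Local Open Scope classical_set_scope.

Lemma inf_mem {R : realType} (m L a d : R) :
  feasible_rates m L a d (rhoGD m L a d) -> rho_star m L a d = rhoGD m L a d.
Proof.
move=> h; rewrite /rho_star.
have lb : lbound (feasible_rates m L a d) (rhoGD m L a d) by move=> x [].
apply/le_anti/andP; split.
  apply: (ge_inf _ h); by exists (rhoGD m L a d).
by apply: lb_le_inf => //; exists (rhoGD m L a d).
Qed.

Lemma inf_app {R : realType} (m L a d : R) :
  0 < rhoGD m L a d -> rho_star m L a d = rhoGD m L a d ->
  forall e, 0 < e -> exists r l, [/\ rhoGD m L a d <= r < rhoGD m L a d + e,
     0 <= l <= 2 / d^+2, 0 <= Fq m L a d r l & 0 <= Fq m L a d (- r) l].
Proof.
move=> h0 hs e e0.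
have [ne|em] := pselect (feasible_rates m L a d !=set0).
  have := @inf_lt _ (feasible_rates m L a d) (rhoGD m L a d + e) ne.
  rewrite -/(rho_star m L a d) hs ltrDl => /(_ e0) [y [hy1 [l [hl0 [hl1 [hF1 hF2]]]]] hy2].
  by exists y, l; split => //; apply/andP; split.
exfalso; move: hs; rewrite /rho_star.
have -> : feasible_rates m L a d = set0.
  apply/seteqP; split => x hx //; by apply: em; exists x.
by rewrite inf0 => h; move: h0; rewrite -h ltxx.
Qed.

Lemma FA1 {R : realType} (m L a d lam : R) : m != 0 -> d != 0 -> 1 - d != 0 ->
  Fq m L a d (1 - a * m * (1 - d)) lam =
  - (d * a * m * (1 - d))^+2 * (lam - (L - m) / (d * m * (1 - d)))^+2.
Proof. move=> hm hd he; rewrite /Fq. field. by rewrite he hm hd. Qed.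

Lemma FA2 {R : realType} (m L a d : R) : m != 0 -> a != 0 -> d != 0 -> 1 - d != 0 ->
  Fq m L a d (- (1 - a * m * (1 - d))) ((L - m) / (d * m * (1 - d))) =
  (2 * a * m - (a * m * (1 - d) + d) * (a * (L + m))) *
   (4 * (1 - a * m * (1 - d)) * (L - m) / (d * a * m^+2 * (1 - d)^+2)).
Proof. move=> hm ha hd he; rewrite /Fq. field. by rewrite he hm ha hd. Qed.

Lemma FB1 {R : realType} (m L a d lam : R) : L != 0 -> d != 0 -> 1 + d != 0 ->
  Fq m L a d (- (a * L * (1 + d) - 1)) lam =
  - (d * a * L * (1 + d))^+2 * (lam - (L - m) / (d * L * (1 + d)))^+2.
Proof. move=> hL hd hf; rewrite /Fq. field. by rewrite hf hL hd. Qed.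

Lemma FB2 {R : realType} (m L a d : R) : L != 0 -> a != 0 -> d != 0 -> 1 + d != 0 ->
  Fq m L a d (a * L * (1 + d) - 1) ((L - m) / (d * L * (1 + d))) =
  ((a * L * (1 + d) - d) * (a * (L + m)) - 2 * a * L) *
   (4 * (a * L * (1 + d) - 1) * (L - m) / (d * a * L^+2 * (1 + d)^+2)).
Proof. move=> hL ha hd hf; rewrite /Fq. field. by rewrite hf hL ha hd. Qed.

Lemma core {R : realType} (m L d alpha : R)
  (hm : 0 < m) (hmL : m < L) (hd0 : 0 < d) (hd1 : d < 1) (ha : 0 < alpha) :
  rho_star m L alpha d = rhoGD m L alpha d <->
  (0 <= 2 * alpha * m - (alpha * m * (1 - d) + d) * (alpha * (L + m)) \/
   0 <= (alpha * L * (1 + d) - d) * (alpha * (L + m)) - 2 * alpha * L).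
Proof.
set c1 := 2 * alpha * m - _.
set c2 := (alpha * L * (1 + d) - d) * _ - _.
set rA := 1 - alpha * m * (1 - d).
set rB := alpha * L * (1 + d) - 1.
have m0 : m != 0 by rewrite gt_eqF.
have L0 : L != 0 by rewrite gt_eqF //; lra.
have a0 : alpha != 0 by rewrite gt_eqF.
have d0 : d != 0 by rewrite gt_eqF.
have e0 : 1 - d != 0 by rewrite gt_eqF //; lra.
have f0 : 1 + d != 0 by rewrite gt_eqF //; lra.
have am0 : 0 < alpha * m by apply: mulr_gt0.
have aL0 : alpha * m < alpha * L by rewrite ltr_pM2l.
have hsum : 0 < rA + rB.
  rewrite /rA /rB.
  have : alpha * m * (1 - d) <= alpha * m by rewrite ler_piMr; lra.
  have : alpha * L <= alpha * L * (1 + d) by rewrite ler_peMr; lra.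
  lra.
have hc12 : c1 = c2 + (alpha * L + alpha * m) * (rA - rB) by rewrite /c1 /c2 /rA /rB; ring.
have Lm0 : 0 < L - m by lra.
have dd0 : 0 < d ^+ 2 by rewrite exprn_gt0.
have [hAB|hAB] := lerP rB rA.
-
  have hG : rhoGD m L alpha d = rA by rewrite /rhoGD max_l.
  have rA0 : 0 < rA by lra.
  set lA := (L - m) / (d * m * (1 - d)).
  have lA0 : 0 < lA by apply: divr_gt0 => //; apply: mulr_gt0; [apply: mulr_gt0|]; lra.
  split.
  + move=> hs; left.
    have happ := @inf_app R m L alpha d ltac:(by rewrite hG) hs.
    rewrite hG in happ.
    have key : 0 <= Fq m L alpha d (- rA) lA.
      apply: (@approx R (fun r l => Fq m L alpha d r l) (fun r l => Fq m L alpha d (- r) l)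
      rA (2 / d^+2) (Kc m L alpha d rA)
      (`|Bq m L alpha d (- rA)| + d^+2 * (- rA - 1)^+2 * (2 / d^+2 + lA))
      ((d * alpha * m * (1 - d))^+2) lA).
      - apply: exprn_gt0; apply: mulr_gt0; [apply: mulr_gt0; [apply: mulr_gt0|]|]; lra.
      - rewrite /Kc; apply: addr_ge0; [|apply: divr_ge0; lra].
        apply: mulr_ge0; [|lra]; apply: mulr_ge0; [lra|]; apply: divr_ge0; lra.
      - apply: addr_ge0 => //; apply: mulr_ge0; [apply: mulr_ge0|]; try apply: sqr_ge0.
        apply: addr_ge0; [apply: divr_ge0|]; lra.
      - move=> r l h1 h2 h3 h4; apply: Fq_lip => //; lra.
      - by move=> l; rewrite /= FA1.
      - by move=> l h1 h2; apply: Fq_llip => //; lra.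
      - move=> e ee; have [r [l [H1 H2 H3 H4]]] := happ e ee.
        by exists r, l; split.
    move: key; rewrite FA2 // pmulr_lge0 //.
    apply: divr_gt0; first by apply: mulr_gt0 => //; apply: mulr_gt0 => //; lra.
    apply: mulr_gt0; [apply: mulr_gt0; [apply: mulr_gt0|]|]; try apply: exprn_gt0; lra.
  + move=> hc.
    have hc1 : 0 <= c1.
      case: hc => // hc; rewrite hc12; apply: addr_ge0 => //.
      apply: mulr_ge0; lra.
    apply: inf_mem; rewrite /feasible_rates /= hG; split => //; exists lA.
    split; first lra.
    split.
      have -> : 2 / d^+2 = lA + (c1 / alpha + alpha * m * (1 - d) * (L + m)) / (d^+2 * m * (1 - d)).
        rewrite /lA /c1; field; by rewrite e0 m0 d0 a0.
      rewrite lerDl; apply: divr_ge0.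
        apply: addr_ge0; [apply: divr_ge0; lra|].
        apply: mulr_ge0; [apply: mulr_ge0|]; lra.
      apply: mulr_ge0; [apply: mulr_ge0|]; lra.
    split.
      by rewrite FA1 // subrr expr0n /= mulr0.
    rewrite FA2 // pmulr_lge0 //.
    apply: divr_gt0; first by apply: mulr_gt0 => //; apply: mulr_gt0 => //; lra.
    apply: mulr_gt0; [apply: mulr_gt0; [apply: mulr_gt0|]|]; try apply: exprn_gt0; lra.
-
  have hG : rhoGD m L alpha d = rB by rewrite /rhoGD max_r // ltW.
  have rB0 : 0 < rB by lra.
  set lB := (L - m) / (d * L * (1 + d)).
  have lB0 : 0 < lB by apply: divr_gt0 => //; apply: mulr_gt0; [apply: mulr_gt0|]; lra.
  split.
  + move=> hs; right.
    have happ := @inf_app R m L alpha d ltac:(by rewrite hG) hs.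
    rewrite hG in happ.
    have key : 0 <= Fq m L alpha d rB lB.
      apply: (@approx R (fun r l => Fq m L alpha d (- r) l) (fun r l => Fq m L alpha d r l)
      rB (2 / d^+2) (Kc m L alpha d rB)
      (`|Bq m L alpha d rB| + d^+2 * (rB - 1)^+2 * (2 / d^+2 + lB))
      ((d * alpha * L * (1 + d))^+2) lB).
      - apply: exprn_gt0; apply: mulr_gt0; [apply: mulr_gt0; [apply: mulr_gt0|]|]; lra.
      - rewrite /Kc; apply: addr_ge0; [|apply: divr_ge0; lra].
        apply: mulr_ge0; [|lra]; apply: mulr_ge0; [lra|]; apply: divr_ge0; lra.
      - apply: addr_ge0 => //; apply: mulr_ge0; [apply: mulr_ge0|]; try apply: sqr_ge0.
        apply: addr_ge0; [apply: divr_ge0|]; lra.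
      - move=> r l h1 h2 h3 h4.
        have [H5 H6] := @Fq_lip R m L alpha d rB r l ltac:(lra) ltac:(lra) ltac:(lra) hd0 ltac:(lra) h1 h2 h3 h4.
        by split.
      - by move=> l; rewrite /= FB1.
      - by move=> l h1 h2; apply: Fq_llip => //; lra.
      - move=> e ee; have [r [l [H1 H2 H3 H4]]] := happ e ee.
        by exists r, l; split.
    move: key; rewrite FB2 // pmulr_lge0 //.
    apply: divr_gt0; first by apply: mulr_gt0 => //; apply: mulr_gt0 => //; lra.
    apply: mulr_gt0; [apply: mulr_gt0; [apply: mulr_gt0|]|]; try apply: exprn_gt0; lra.
  + move=> hc.
    have hc2 : 0 <= c2.
      case: hc => // hc; have -> : c2 = c1 + (alpha * L + alpha * m) * (rB - rA) by lra.
      apply: addr_ge0 => //; apply: mulr_ge0; lra.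
    apply: inf_mem; rewrite /feasible_rates /= hG; split => //; exists lB.
    split; first lra.
    split.
      have -> : 2 / d^+2 = lB + (2 * L + d * (L + m)) / (d^+2 * L * (1 + d)).
        rewrite /lB; field; by rewrite f0 L0 d0.
      rewrite lerDl; apply: divr_ge0.
        apply: addr_ge0; [|apply: mulr_ge0]; lra.
      apply: mulr_ge0; [apply: mulr_ge0|]; lra.
    split; last first.
      by rewrite FB1 // subrr expr0n /= mulr0.
    rewrite FB2 // pmulr_lge0 //.
    apply: divr_gt0; first by apply: mulr_gt0 => //; apply: mulr_gt0 => //; lra.
    apply: mulr_gt0; [apply: mulr_gt0; [apply: mulr_gt0|]|]; try apply: exprn_gt0; lra.
Qed.

Theorem lemma3p2 (R : realType) (m L delta alpha : R)
  (hm : 0 < m) (hmL : m < L) (hd0 : 0 < delta) (hd1 : delta < 1) (ha : 0 < alpha) :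
  let kappa := L / m in
  let alpha_minus := (1 - delta)^-1 * (2 / (L + m) - delta / m) in
  let alpha_plus := (1 + delta)^-1 * (2 / (L + m) + delta / L) in
  rho_star m L alpha delta = rhoGD m L alpha delta <->
  ((delta < 2 / (kappa + 1) /\ alpha <= alpha_minus) \/
   ((0 <= delta /\ delta < 1) /\ alpha_plus <= alpha)).
Proof.
move=> kappa am ap.
rewrite (@core R m L delta alpha hm hmL hd0 hd1 ha).
set c1 := 2 * alpha * m - _.
set c2 := (alpha * L * (1 + delta) - delta) * _ - _.
have m0 : m != 0 by rewrite gt_eqF.
have L0 : L != 0 by rewrite gt_eqF //; lra.
have Lm0 : L + m != 0 by rewrite gt_eqF //; lra.
have a0 : alpha != 0 by rewrite gt_eqF.
have e0 : 1 - delta != 0 by rewrite gt_eqF //; lra.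
have f0 : 1 + delta != 0 by rewrite gt_eqF //; lra.
have P1 : 0 < alpha * m * (L + m) * (1 - delta).
  by apply: mulr_gt0; [apply: mulr_gt0; [apply: mulr_gt0|]|]; lra.
have P2 : 0 < alpha * L * (L + m) * (1 + delta).
  by apply: mulr_gt0; [apply: mulr_gt0; [apply: mulr_gt0|]|]; lra.
have E1 : c1 = (am - alpha) * (alpha * m * (L + m) * (1 - delta)).
  rewrite /c1 /am; field; by rewrite e0 m0 Lm0.
have E2 : c2 = (alpha - ap) * (alpha * L * (L + m) * (1 + delta)).
  rewrite /c2 /ap; field; by rewrite f0 L0 Lm0.
have E3 : 2 / (kappa + 1) - delta =
    (c1 + alpha^+2 * m * (1 - delta) * (L + m)) / (alpha * (L + m)).
  rewrite /c1 /kappa; field; by rewrite Lm0 a0 m0.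
have H1 : (0 <= c1) = (alpha <= am) by rewrite E1 pmulr_lge0 // subr_ge0.
have H2 : (0 <= c2) = (ap <= alpha) by rewrite E2 pmulr_lge0 // subr_ge0.
rewrite H1 H2; split.
  case=> h; [left|right]; split => //; last by split; lra.
  rewrite -subr_gt0 E3; apply: divr_gt0; last by apply: mulr_gt0; lra.
  rewrite -H1 in h; apply: ltr_wpDl => //.
  by apply: mulr_gt0; [apply: mulr_gt0; [apply: mulr_gt0; [apply: exprn_gt0|]|]|]; lra.
by case=> [[_ h]|[_ h]]; [left|right].
Qed.
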